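(* Let $G$ be a nilpotent group of class at most $2$ (so $[G,G]$ is central), let $w=(w_1,\dots,w_l)\in G^l$ be a word of length $l$ over $G$, and let $x\in G$. For $0\le i\le l$ let $w_{\le i}=(w_1,\dots,w_i)$ be the $i$-th prefix of $w$, and set $A=\{[x,\mathrm{val}(w_{\le i})] : 0\le i\le l\}\subseteq[G,G]$. Then for every word $u$ obtained from $w$ by inserting $n$ occurrences of the letter $x$ (at arbitrary positions), we have $\mathrm{val}(u)\in \mathrm{val}(x^nw)\,A^n$. Moreover, if $\mathrm{val}(u)\in\mathrm{val}(x^nw)\,B^n$ for some subset $B\subseteq A$, then there is a word $u'$ obtained from $w$ by inserting $n$ occurrences of $x$ such that these occurrences form at most $|B|$ maximal blocks of consecutive letters $x$ (i.e. powers $x^{c}$), and $\mathrm{val}(u')=\mathrm{val}(u)$.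
   Context: A word over $G$ is a finite sequence of elements of $G$; $\mathrm{val}$ of a word is the product of its letters in $G$ (the empty word has value $1$); $x^nw$ is the word consisting of $n$ letters $x$ followed by $w$. Commutators are taken with the convention $[x,g]=g^{-1}x^{-1}gx$, so that $gx=xg[x,g]$. For a subset $B$ of the abelian group $[G,G]$, $B^n=\{c_1c_2\cdots c_n: c_i\in B\}$, and $gB^n=\{gc: c\in B^n\}$. *)

(* Defs.v *)
From HB Require Import structures.
From mathcomp Require Import all_boot.

Set Implicit Arguments.
Unset Strict Implicit.
Unset Printing Implicit Defensive.

Section Words.
Variable G : groupType.

Definition wval (w : seq G) : G := foldr (@mul G) (@one G) w.

Definition pcomm (x g : G) : G :=
  mul (inv g) (mul (inv x) (mul g x)).

Definition class_le2 : Prop :=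
  forall a b c : G, mul (pcomm a b) c = mul c (pcomm a b).

Definition Aset (x : G) (w : seq G) : seq G :=
  [seq pcomm x (wval (take i w)) | i <- iota 0 (size w).+1].

(* g \in h B^n  (B given as a list of its elements) *)
Definition in_coset_pow (g h : G) (B : seq G) (n : nat) : Prop :=
  exists cs : seq G, [/\ size cs = n, all (fun c => c \in B) cs & g = mul h (wval cs)].

(* u is obtained from w by inserting n letters x; the bitseq m marks the
   positions of u that belong to w (true) and the inserted x's (false). *)
Definition insertion (x : G) (n : nat) (w u : seq G) (m : bitseq) : Prop :=
  [/\ size m = size u, mask m u = w, count negb m = n &
      forall i, i < size u -> nth true m i = false -> nth x u i = x].

Definition inserted (x : G) (n : nat) (w u : seq G) : Prop :=
  exists m : bitseq, insertion x n w u m.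

End Words.

(* number of maximal blocks of consecutive `false` entries (inserted x's) *)
Definition nblocks (m : bitseq) : nat :=
  count (fun p : bool * bool => p.1 && ~~ p.2) (zip (true :: m) m).

(* Main.v *)
Require Import Defs.
From HB Require Import structures.
From mathcomp Require Import all_boot.
Set Implicit Arguments. Unset Strict Implicit.
Open Scope group_scope.

Lemma wval_cat (G : groupType) (s1 s2 : seq G) : wval (s1 ++ s2) = wval s1 * wval s2.
Proof. by elim: s1 => [|a s IH] /=; rewrite ?mul1g // IH mulgA. Qed.

Lemma wval_nseq (G : groupType) (x : G) n : wval (nseq n x) = x ^+ n.
Proof. by elim: n => [|n IH] //=; rewrite IH expgS. Qed.

Definition central (G : groupType) (c : G) := forall z, c * z = z * c.

Lemma pcomm_central (G : groupType) (hG : class_le2 G) (a b : G) : central (pcomm a b).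
Proof. move=> z; exact: hG. Qed.

Lemma central_mul (G : groupType) (a b : G) : central a -> central b -> central (a * b).
Proof. move=> ha hb; rewrite /central => z. by rewrite -mulgA (hb z) mulgA (ha z) -mulgA. Qed.

Lemma central_exp (G : groupType) (a : G) n : central a -> central (a ^+ n).
Proof. move=> ha; rewrite /central; elim: n => [|n IH] z; first by rewrite expg0 mul1g (@mulg1 G).
by rewrite expgS; apply: central_mul. Qed.

Lemma pcomm1 (G : groupType) (x : G) : pcomm x 1 = 1.
Proof. by rewrite /pcomm invg1 !mul1g mulVg. Qed.

Lemma swap1 (G : groupType) (x g : G) : g * x = x * g * pcomm x g.
Proof. by rewrite /pcomm !mulgA (mulgK g x) mulgV mul1g. Qed.

Lemma pcommM (G : groupType) (hG : class_le2 G) (x g h : G) :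
  pcomm x (g * h) = pcomm x g * pcomm x h.
Proof.
apply: (@mulgI _ (x * (g * h))).
rewrite -swap1 -mulgA (swap1 x h) !mulgA (swap1 x g).
rewrite -(mulgA (x * g)) (pcomm_central hG x g h).
by rewrite !mulgA.
Qed.

Lemma commC (G : groupType) (a b : G) : central a -> commute a b.
Proof. by move=> ha; apply: ha. Qed.

Lemma swapN (G : groupType) (hG : class_le2 G) (x g : G) n :
  g * x ^+ n = x ^+ n * g * pcomm x g ^+ n.
Proof.
elim: n => [|n IH]; first by rewrite !expg0 mul1g !(@mulg1 G).
rewrite expgSr mulgA IH -mulgA (central_exp n (pcomm_central hG x g) x).
rewrite mulgA -(mulgA (x ^+ n)) (swap1 x g) (expgS (pcomm x g) n) !mulgA.
done.
Qed.

Lemma wval_mapc (G : groupType) (c : G) (cs : seq G) :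
  central c -> c ^+ size cs * wval cs = wval (map (mul c) cs).
Proof.
move=> hc; elim: cs => [|a cs IH] /=; first by rewrite expg0 mul1g.
by rewrite expgS -IH -!mulgA; congr (_ * _); rewrite !mulgA (central_exp _ hc a).
Qed.

Lemma AsetP (G : groupType) (x z : G) (w : seq G) :
  reflect (exists2 i, i <= size w & z = pcomm x (wval (take i w))) (z \in Aset x w).
Proof.
apply: (iffP mapP) => [[i]|[i hi ->]].
  by rewrite mem_iota add0n ltnS => hi ->; exists i.
by exists i => //; rewrite mem_iota add0n ltnS.
Qed.

Lemma key1 (G : groupType) (hG : class_le2 G) (x : G) (u : seq G) :
  forall m w n, insertion x n w u m ->
  exists cs : seq G, [/\ size cs = n, all (fun c => c \in Aset x w) cs &
     wval u = wval (nseq n x ++ w) * wval cs].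
Proof.
elim: u => [|a u IH] [|b m] w n [/= hs hm hc hn] //.
  by exists [::]; subst; rewrite /= (@mulg1 G).
case: b hs hm hc hn => /= [[hs] hm hc hn | [hs] hm hc hn].
  have hins : insertion x n (mask m u) u m.
    split => // i hi hf; exact: (hn i.+1 hi hf).
  have [cs [hcs hall hv]] := IH _ _ _ hins.
  exists (map (mul (pcomm x a)) cs); split.
  - by rewrite size_map.
  - apply/allP => z /mapP [c hc' ->].
    have /AsetP [i hi ->] := allP hall c hc'.
    apply/AsetP; exists i.+1; first by rewrite -hm /= ltnS.
    by rewrite -hm /= pcommM.
  - rewrite -hm -wval_mapc; last exact: pcomm_central.
    rewrite hv !wval_cat !wval_nseq /= hcs !mulgA swapN // -hcs.
    rewrite -!mulgA; congr (_ * (_ * _)).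
    rewrite !mulgA; congr (_ * _).
    by rewrite (central_exp _ (pcomm_central hG x a)).
have ha : a = x by have := hn 0 erefl erefl.
have hins : insertion x (count negb m) w u m.
  split => // i hi hf; exact: (hn i.+1 hi hf).
have [cs [hcs hall hv]] := IH _ _ _ hins.
exists (1 :: cs); split.
- by rewrite -hc /= hcs.
- rewrite /= hall andbT; apply/AsetP; exists 0 => //.
  by rewrite take0 /= pcomm1.
- by rewrite -hc /= hv ha mul1g !mulgA.
Qed.

Fixpoint build (G : groupType) (x : G) (w : seq G) (k : nat -> nat) : seq G :=
  match w with
  | [::] => nseq (k 0) x
  | y :: w' => nseq (k 0) x ++ y :: build x w' (fun i => k i.+1)
  end.

Fixpoint bm (G : groupType) (w : seq G) (k : nat -> nat) : bitseq :=
  match w with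
  | [::] => nseq (k 0) false
  | y :: w' => nseq (k 0) false ++ true :: bm w' (fun i => k i.+1)
  end.

Fixpoint Ns (G : groupType) (w : seq G) (k : nat -> nat) : nat :=
  match w with
  | [::] => k 0
  | y :: w' => k 0 + Ns w' (fun i => k i.+1)
  end.

Fixpoint P (G : groupType) (x : G) (w : seq G) (k : nat -> nat) (g : G) : G :=
  match w with
  | [::] => pcomm x g ^+ k 0
  | y :: w' => pcomm x g ^+ k 0 * P x w' (fun i => k i.+1) (g * y)
  end.

Lemma P_ext (G : groupType) (x : G) w : forall k1 k2 g, k1 =1 k2 -> P x w k1 g = P x w k2 g.
Proof.
elim: w => [|y w IH] k1 k2 g e /=; first by rewrite e.
by rewrite e (IH _ (fun i => k2 i.+1)).
Qed.

Lemma Ns_ext (G : groupType) (w : seq G) : forall k1 k2, k1 =1 k2 -> Ns w k1 = Ns w k2.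
Proof.
elim: w => [|y w IH] k1 k2 e /=; first by rewrite e.
by rewrite e (IH _ (fun i => k2 i.+1)).
Qed.

Lemma P_central (G : groupType) (hG : class_le2 G) (x : G) w :
  forall k g, central (P x w k g).
Proof.
elim: w => [|y w IH] k g /=; first exact/central_exp/pcomm_central.
by apply: central_mul; [exact/central_exp/pcomm_central | exact: IH].
Qed.

Lemma Pshift (G : groupType) (hG : class_le2 G) (x : G) w :
  forall k g h, P x w k (h * g) = pcomm x h ^+ Ns w k * P x w k g.
Proof.
elim: w => [|y w IH] k g h /=.
  by rewrite pcommM // expgMn //; apply: commC; apply: pcomm_central.
rewrite -(mulgA h g y) (IH _ (g * y) h) pcommM // expgMn; last by apply: commC; apply: pcomm_central.
rewrite expgnDr -!mulgA; congr (_ * _); rewrite !mulgA; congr (_ * _).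
by rewrite (central_exp _ (pcomm_central hG x g)).
Qed.

Lemma Pval (G : groupType) (hG : class_le2 G) (x : G) w :
  forall k, wval (build x w k) = wval (nseq (Ns w k) x ++ w) * P x w k 1.
Proof.
elim: w => [|y w IH] k /=.
  by rewrite cats0 wval_nseq pcomm1 expg1n (@mulg1 G).
rewrite !wval_cat /= IH wval_cat !wval_nseq.
have -> : P x w (fun i => k i.+1) (1 * y) =
    pcomm x y ^+ Ns w (fun i => k i.+1) * P x w (fun i => k i.+1) 1.
  by rewrite -Pshift // mul1g (@mulg1 G).
rewrite pcomm1 expg1n mul1g expgnDr.
rewrite -!mulgA; congr (_ * _).
rewrite !mulgA swapN //.
rewrite -!mulgA; congr (_ * (_ * _)).
rewrite !mulgA; congr (_ * _).
by rewrite (central_exp _ (pcomm_central hG x y)).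
Qed.

Lemma Pdelta (G : groupType) (hG : class_le2 G) (x : G) w :
  forall k g j, j <= size w ->
  P x w (fun i => (i == j) + k i) g = P x w k g * pcomm x (g * wval (take j w)).
Proof.
elim: w => [|y w IH] k g [|j] //= hj.
- by rewrite (@mulg1 G) expgnDr expg1 pcomm_central.
- rewrite (@mulg1 G) expgnDr expg1 (@P_ext _ x w _ (fun i => k i.+1)) //.
  by rewrite -mulgA (pcomm_central hG).
- rewrite expgnDr expg0 mul1g (@P_ext _ x w _ (fun i => (i == j) + k i.+1)) // IH //.
  by rewrite !mulgA.
Qed.

Lemma Nsdelta (G : groupType) (w : seq G) :
  forall k j, j <= size w -> Ns w (fun i => (i == j) + k i) = (Ns w k).+1.
Proof.
elim: w => [|y w IH] k [|j] //= hj.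
- rewrite (@Ns_ext _ w _ (fun i => (i == j) + k i.+1)) // IH // addnS. done.
Qed.

Lemma P0 (G : groupType) (x : G) w : forall g, P x w (fun _ => 0) g = 1.
Proof. by elim: w => [|y w IH] g //=; rewrite IH expg0 mul1g. Qed.

Lemma Ns0 (G : groupType) (w : seq G) : Ns w (fun _ => 0) = 0.
Proof. by elim: w => //= y w ->. Qed.

Lemma insF (G : groupType) (x : G) n w u m :
  insertion x n w u m -> insertion x n.+1 w (x :: u) (false :: m).
Proof.
case=> hs hm hc hn; split => /=; rewrite ?hs ?hm ?hc //.
by case=> [|i] //= hi hf; apply: hn.
Qed.

Lemma insT (G : groupType) (x y : G) n w u m :
  insertion x n w u m -> insertion x n (y :: w) (y :: u) (true :: m).
Proof.
case=> hs hm hc hn; split => /=; rewrite ?hs ?hm ?hc //.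
by case=> [|i] //= hi hf; apply: hn.
Qed.

Lemma insN (G : groupType) (x : G) a n w u m :
  insertion x n w u m -> insertion x (a + n) w (nseq a x ++ u) (nseq a false ++ m).
Proof. elim: a => [|a IH] //= h; exact: insF (IH h). Qed.

Lemma build_ins (G : groupType) (x : G) w :
  forall k, insertion x (Ns w k) w (build x w k) (bm w k).
Proof.
elim: w => [|y w IH] k /=.
  have h := @insN G x (k 0) 0 [::] [::] [::]; rewrite addn0 !cats0 in h.
  by apply: h; split.
by apply: insN; apply: insT.
Qed.

Definition nb (b : bool) (m : bitseq) : nat :=
  count (fun p : bool * bool => p.1 && ~~ p.2) (zip (b :: m) m).

Lemma nbF (a : nat) s : nb false (nseq a false ++ s) = nb false s.
Proof. by elim: a => [|a IH] //. Qed.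

Lemma nbT (a : nat) r : nb true (nseq a false ++ true :: r) = (0 < a) + nb true r.
Proof.
case: a => [|a] //=.
rewrite /nb /= -/(nb false _).
by have := nbF a (true :: r); rewrite /nb => ->.
Qed.

Lemma nbT0 (a : nat) : nb true (nseq a false) = (0 < a).
Proof.
case: a => [|a] //=.
rewrite /nb /= -/(nb false _).
by have := nbF a [::]; rewrite cats0 => ->.
Qed.

Lemma nblocksE m : nblocks m = nb true m. Proof. by []. Qed.

Lemma bm_blocks (G : groupType) (w : seq G) :
  forall k, nblocks (bm w k) = count (fun i => 0 < k i) (iota 0 (size w).+1).
Proof.
elim: w => [|y w IH] k.
  by rewrite nblocksE nbT0 /= addn0.
rewrite nblocksE.
change (bm (y :: w) k) with (nseq (k 0) false ++ true :: bm w (fun i => k i.+1)).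
rewrite nbT -nblocksE IH.
have -> : iota 0 (size (y :: w)).+1 = 0 :: iota 1 (size w).+1 by [].
rewrite -cat1s count_cat; congr (_ + _); first by rewrite /= addn0.
rewrite -[1%N]addn0 iotaDl count_map; apply: eq_count => i /=.
by rewrite add1n.
Qed.

Lemma size_Aset (G : groupType) (x : G) w : size (Aset x w) = (size w).+1.
Proof. by rewrite size_map size_iota. Qed.

Lemma nth_Aset (G : groupType) (x : G) w j : j <= size w ->
  nth 1 (Aset x w) j = pcomm x (wval (take j w)).
Proof.
move=> hj; rewrite (nth_map 0%N); last by rewrite size_iota ltnS.
by rewrite nth_iota ?ltnS // add0n.
Qed.

Definition kof (G : groupType) (A cs : seq G) := fun i => count (fun c => index c A == i) cs.

Lemma kof_val (G : groupType) (hG : class_le2 G) (x : G) w (cs : seq G) :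
  all (fun c => c \in Aset x w) cs ->
  P x w (kof (Aset x w) cs) 1 = wval cs /\ Ns w (kof (Aset x w) cs) = size cs.
Proof.
elim: cs => [|c cs IH] /=.
  move=> _; split.
    by rewrite (@P_ext _ x w _ (fun _ => 0)) // P0.
  by rewrite (@Ns_ext _ w _ (fun _ => 0)) // Ns0.
case/andP => hc hall; have [IH1 IH2] := IH hall.
have hj : index c (Aset x w) <= size w by rewrite -ltnS -(size_Aset x w) index_mem.
have e : kof (Aset x w) (c :: cs) =1
    (fun i => (i == index c (Aset x w)) + kof (Aset x w) cs i).
  by move=> i; rewrite /kof /= eq_sym.
split.
  rewrite (@P_ext _ x w _ _ 1 e) Pdelta // IH1 mul1g -nth_Aset // nth_index //.
  by have /AsetP [i _ ->] := hc; rewrite (pcomm_central hG).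
by rewrite (@Ns_ext _ w _ _ e) Nsdelta // IH2.
Qed.

Lemma count_bound (G : groupType) (A B cs : seq G) L :
  all (fun c => c \in B) cs ->
  count (fun i => 0 < kof A cs i) (iota 0 L) <= size B.
Proof.
move=> hall; rewrite -size_filter -(size_map (fun c => index c A) B).
apply: uniq_leq_size; first by rewrite filter_uniq // iota_uniq.
move=> i; rewrite mem_filter => /andP [hpos _].
rewrite /kof -has_count in hpos.
case/hasP: hpos => c hc /eqP <-.
by apply: map_f; apply: (allP hall).
Qed.

Unset Implicit Arguments.
Close Scope group_scope.

Theorem mainTheorem4 (G : groupType) (hG : class_le2 G)
    (w : seq G) (x : G) (n : nat) (u : seq G) :
  inserted x n w u ->
  in_coset_pow (wval u) (wval (nseq n x ++ w)) (Aset x w) n /\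
  (forall B : seq G, uniq B -> {subset B <= Aset x w} ->
     in_coset_pow (wval u) (wval (nseq n x ++ w)) B n ->
     exists (u' : seq G) (m' : bitseq),
       [/\ insertion x n w u' m', nblocks m' <= size B & wval u' = wval u]).
Proof.
case=> m hm; split.
  have [cs [h1 h2 h3]] := key1 hG hm.
  by exists cs.
move=> B _ hsub [cs [hsz hall hv]].
have hallA : all (fun c => c \in Aset x w) cs.
  by apply/allP => c hc; apply: hsub; apply: (allP hall).
have [hP hN] := kof_val hG hallA.
exists (build x w (kof (Aset x w) cs)), (bm w (kof (Aset x w) cs)); split.
- by rewrite -hsz -hN; apply: build_ins.
- by rewrite bm_blocks; apply: count_bound.
- by rewrite Pval // hN hsz hP hv.
Qed.
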